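(* Let $(H,\mathcal P)$ be a hypergraph colouring instance with pinnings, $H=(V,\mathcal E)$ with maximum degree $\Delta$, and let $k'\le k$ be integers with $k'\ge 2$ such that $k'\le|e|\le k$ for every $e\in\mathcal E$. Let $t\ge k$ and $q\ge(\mathrm e t\Delta)^{\frac{1}{k'-1}}$. Then for every $v\in V$ and every colour $c\in[q]$, $$\frac1q\Big(1-\frac1t\Big)\le\Pr_{\sigma\sim\mu_{\mathcal C}}[\sigma(v)=c]\le\frac1q\Big(1+\frac4t\Big).$$
   Context: A hypergraph $H=(V,\mathcal E)$ has finite vertex set $V$ and hyperedges $\mathcal E\subseteq 2^V$; its maximum degree $\Delta$ is the maximum number of hyperedges containing a single vertex. For $q\in\mathbb N$, a hypergraph colouring instance with pinnings is a pair $(H,\mathcal P)$ with $\mathcal P=\{P_e\subseteq[q]:e\in\mathcal E\}$. A colouring $\sigma\in[q]^V$ is proper if $|\{\sigma(u):u\in e\}\cup P_e|>1$ for every $e\in\mathcal E$. $\mathcal C$ is the set of proper colourings and $\mu_{\mathcal C}$ the uniform distribution on $\mathcal C$. $\mathrm e$ denotes Euler's number. *)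

(* Defs.v *)
From HB Require Import structures.
From mathcomp Require Import all_boot all_order all_algebra.
From mathcomp Require Import all_classical all_reals all_analysis.
Set Implicit Arguments. Unset Strict Implicit. Unset Printing Implicit Defensive.
Import Order.TTheory GRing.Theory Num.Theory.

(* A hypergraph on a finite vertex type V is given by its set of hyperedges
   E : {set {set V}}; pinnings P assign to each hyperedge a set of colours in
   [q] = 'I_q. *)

Definition hdeg (V : finType) (E : {set {set V}}) (v : V) : nat :=
  #|[set e in E | v \in e]|.

Definition maxdeg (V : finType) (E : {set {set V}}) : nat :=
  \max_(v : V) hdeg E v.

Definition proper_col (V : finType) (q : nat) (E : {set {set V}})
    (P : {set V} -> {set 'I_q}) (sigma : {ffun V -> 'I_q}) : bool :=
  [forall e in E, 1 < #|[set sigma u | u in e] :|: P e|].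

Definition proper_cols (V : finType) (q : nat) (E : {set {set V}})
    (P : {set V} -> {set 'I_q}) : {set {ffun V -> 'I_q}} :=
  [set sigma | proper_col E P sigma].

Definition prob_colour (R : realType) (V : finType) (q : nat)
    (E : {set {set V}}) (P : {set V} -> {set 'I_q}) (v : V) (c : 'I_q) : R :=
  (#|[set sigma in proper_cols E P | sigma v == c]|%:R
     / #|proper_cols E P|%:R)%R.

(* Main.v *)
Require Import Defs.
From HB Require Import structures.
From mathcomp Require Import all_boot all_order all_algebra.
From mathcomp Require Import all_classical all_reals all_analysis.
From mathcomp Require Import ring lra zify.
Import Order.TTheory GRing.Theory Num.Theory.
Set Implicit Arguments. Unset Strict Implicit. Unset Printing Implicit Defensive.

Definition upd (V : finType) (q : nat) (s : {ffun V -> 'I_q}) (u : V) (a : 'I_q)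
  : {ffun V -> 'I_q} := [ffun x => if x == u then a else s x].

Definition Mset (V : finType) (q : nat) (S : {set V}) (c : 'I_q)
  : {set {ffun V -> 'I_q}} := [set s : {ffun V -> 'I_q} | [forall u in S, s u == c]].

Definition invar (V : finType) (q : nat) (S : {set V}) (G : {set {ffun V -> 'I_q}}) :=
  forall s s' : {ffun V -> 'I_q}, s \in G -> (forall x, x \notin S -> s' x = s x) -> s' \in G.

Lemma indep_card (V : finType) (q : nat) (c : 'I_q) : forall n (S : {set V}) G,
  #|S| = n -> invar S G -> (#|G :&: Mset S c| * q ^ n <= #|G|)%N.
Proof.
elim=> [|n IH] S G hS hG.
  by rewrite expn0 muln1 subset_leq_card // subsetIl.
have : (0 < #|S|)%N by rewrite hS.
case/card_gt0P => u uS.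
have hS0 : #|S :\ u| = n.
  by move: hS; rewrite (cardsD1 u S) uS add1n => -[].
have hG0 : invar (S :\ u) G.
  move=> s s' sG hs; apply: (hG s) => // x xS; apply: hs.
  by rewrite in_setD1 (negbTE xS) andbF.
have := IH _ _ hS0 hG0.
suff h : (#|G :&: Mset S c| * q <= #|G :&: Mset (S :\ u) c|)%N.
  move=> h2; apply: leq_trans h2; rewrite expnS mulnA leq_mul2r h orbT //.
pose f := fun p : 'I_q * {ffun V -> 'I_q} => upd p.2 u p.1.
have inj : {in finset.setX [set: 'I_q] (G :&: Mset S c) &, injective f}.
  move=> [a s] [b s']; rewrite !inE /= => /andP[_ /forallP Hs]
    /andP[_ /forallP Hs'] /ffunP eq.
  have := eq u; rewrite /f /upd !ffunE eqxx /= => eab; subst b.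
  congr pair; apply/ffunP => x; have := eq x; rewrite /f /upd !ffunE /=.
  case: eqP => [->|] //= _.
  by have := Hs u; have := Hs' u; rewrite uS /= => /eqP -> /eqP ->.
have := card_in_imset inj; rewrite cardsX cardsT card_ord mulnC => <-.
apply: subset_leq_card; apply/fintype.subsetP => s' /imsetP [[a s]].
rewrite !inE /= => /andP[sG /forallP Hs] ->.
apply/andP; split.
  apply: (hG s) => // x xS; rewrite /f /upd ffunE /=.
  by case: eqP => // exu; rewrite exu uS in xS.
apply/forallP => x; apply/implyP; rewrite in_setD1 => /andP[xu xS].
by rewrite /f /upd ffunE /= (negbTE xu); have := Hs x; rewrite xS.
Qed.

Definition Bad (V : finType) (q : nat) (P : {set V} -> {set 'I_q}) (f : {set V})
  : {set {ffun V -> 'I_q}} :=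
  [set s : {ffun V -> 'I_q} | ~~ (1 < #|[set s u | u in f] :|: P f|)%N].

Lemma good_sub (V : finType) (q : nat) (P : {set V} -> {set 'I_q}) (F1 F2 : {set {set V}}) :
  F1 \subset F2 -> proper_cols F2 P \subset proper_cols F1 P.
Proof.
move=> /fintype.subsetP h; apply/fintype.subsetP => s; rewrite !inE /proper_col.
move=> /forallP H; apply/forallP => e; apply/implyP => eF.
by have := H e; rewrite (h _ eF).
Qed.

Lemma good_add (V : finType) (q : nat) (P : {set V} -> {set 'I_q}) (F : {set {set V}}) f :
  #|proper_cols F P| = (#|proper_cols (f |: F) P| + #|proper_cols F P :&: Bad P f|)%N.
Proof.
rewrite -(cardsID (Bad P f) (proper_cols F P)) addnC; congr (_ + _)%N.
apply: eq_card => s; rewrite !inE /proper_col.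
rewrite negbK; apply/andP/forallP.
  move=> [H1 /forallP H2] e; apply/implyP; rewrite in_setU1 => /orP[/eqP ->|eF].
    by [].
  by have := H2 e; rewrite eF.
move=> H; split.
  by have := H f; rewrite in_setU1 eqxx.
by apply/forallP => e; apply/implyP => eF; have := H e; rewrite in_setU1 eF orbT.
Qed.

Lemma good_bad0 (V : finType) (q : nat) (P : {set V} -> {set 'I_q}) (F : {set {set V}}) f :
  f \in F -> proper_cols F P :&: Bad P f = finset.set0.
Proof.
move=> fF; apply/setP => s; rewrite !inE /proper_col.
apply/negbTE; apply/negP => /andP[/forallP H]; have := H f; rewrite fF /= => ->.
by [].
Qed.

Lemma good_invar (V : finType) (q : nat) (P : {set V} -> {set 'I_q}) (F : {set {set V}}) (S : {set V}) :
  (forall f, f \in F -> [disjoint f & S]) -> invar S (proper_cols F P).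
Proof.
move=> hd s s'; rewrite !inE /proper_col => /forallP H hs.
apply/forallP => e; apply/implyP => eF.
have -> : [set s' u | u in e] = [set s u | u in e].
  apply: eq_in_imset => u ue; apply: hs.
  by apply/negP => uS; have := disjointFr (hd e eF) ue; rewrite uS.
by have := H e; rewrite eF.
Qed.

Lemma bad_card (V : finType) (q : nat) (P : {set V} -> {set 'I_q}) (G : {set {ffun V -> 'I_q}}) (f : {set V}) :
  (0 < #|f|)%N -> invar f G -> (#|G :&: Bad P f| * q ^ #|f| <= q * #|G|)%N.
Proof.
move=> /card_gt0P [u0 u0f] hG.
have sub : G :&: Bad P f \subset \bigcup_(c : 'I_q) (G :&: Mset f c).
  apply/fintype.subsetP => s; rewrite !inE => /andP[sG Hb].
  apply/bigcupP; exists (s u0) => //; rewrite !inE sG /=.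
  apply/forallP => u; apply/implyP => uf.
  have : (#|[set s u | u in f]| <= 1)%N.
    by apply: leq_trans (subset_leq_card (finset.subsetUl _ (P f))) _; rewrite leqNgt.
  move/card_le1_eqP => H; apply/eqP; apply: H; apply: imset_f => //.
have h1 := subset_leq_card sub.
have h2 := unstable.card_big_setU (index_enum 'I_q) xpredT (fun c => G :&: Mset f c).
apply: leq_trans (leq_mul (leq_trans h1 h2) (leqnn _)) _.
rewrite big_distrl /=.
apply: (@leq_trans (\sum_(i < q) #|G|)).
  by apply: leq_sum => c _; exact: (indep_card c (erefl _) hG).
by rewrite sum_nat_const card_ord.
Qed.

Local Open Scope ring_scope.

Definition lll_hyp (R : realType) (V : finType) (q : nat) (P : {set V} -> {set 'I_q})
  (E : {set {set V}}) (x : R) (N : nat) :=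
  forall G : {set {set V}}, G \subset E -> (#|G| < N)%N -> forall f, f \in E ->
  (#|proper_cols G P :&: Bad P f|%:R <= x * #|proper_cols G P|%:R).

Lemma chain (R : realType) (V : finType) (q : nat) (P : {set V} -> {set 'I_q})
  (E : {set {set V}}) (x : R) (N : nat) :
  0 <= x <= 1 -> lll_hyp P E x N ->
  forall n (H F2 : {set {set V}}), #|H| = n -> H \subset E -> F2 \subset E ->
  (#|F2 :|: H| <= N)%N ->
  (1 - x) ^+ n * #|proper_cols F2 P|%:R <= #|proper_cols (F2 :|: H) P|%:R.
Proof.
move=> /andP[x0 x1] hyp; elim=> [|n IH] H F2 hH HE F2E hN.
  by move/cards0_eq: hH => ->; rewrite finset.setU0 expr0 mul1r.
have : (0 < #|H|)%N by rewrite hH.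
case/card_gt0P => f fH.
have hH' : #|H :\ f| = n by move: hH; rewrite (cardsD1 f H) fH add1n => -[].
have H'E : H :\ f \subset E by apply: fintype.subset_trans HE; apply: finset.subsetDl.
have fE : f \in E by apply: (fintype.subsetP HE).
have eqH : F2 :|: H = f |: (F2 :|: H :\ f) by rewrite finset.setUCA finset.setD1K.
have x1' : 0 <= 1 - x by rewrite subr_ge0.
have x1'' : 1 - x <= 1 by rewrite lerBlDr lerDl.
have g0 : forall X : {set {set V}}, 0 <= #|proper_cols X P|%:R :> R by move=> X; apply: ler0n.
case fX : (f \in F2 :|: H :\ f).
  have eqH2 : F2 :|: H = F2 :|: H :\ f by rewrite eqH; apply/setP => y; rewrite in_setU1; case: eqP => // ->; rewrite fX.
  rewrite eqH2; apply: le_trans (IH _ _ hH' H'E F2E _); last by rewrite -eqH2.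
  rewrite exprS -[X in _ <= X]mul1r mulrA; apply: ler_wpM2r; first exact: g0.
  by apply: ler_wpM2r => //; exact: exprn_ge0.
have hN' : (#|F2 :|: H :\ f| < N)%N.
  apply: leq_trans hN; rewrite eqH [X in (_ < X)%N](cardsU1 f) fX add1n ltnSn //.
have hX : F2 :|: H :\ f \subset E by rewrite finset.subUset F2E.
have hb := hyp _ hX hN' f fE.
have hi := IH _ _ hH' H'E F2E (ltnW hN').
rewrite eqH.
have ga := good_add P (F2 :|: H :\ f) f.
set X := F2 :|: H :\ f in ga hb hi *.
have e : (#|proper_cols X P|%:R : R) =
  #|proper_cols (f |: X) P|%:R + #|proper_cols X P :&: Bad P f|%:R by rewrite ga natrD.
rewrite exprS -mulrA.
apply: le_trans (ler_wpM2l x1' hi) _.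
rewrite mulrBl mul1r; lra.
Qed.

Definition Gam (V : finType) (E : {set {set V}}) (S : {set V}) : {set {set V}} :=
  [set h in E | ~~ [disjoint h & S]].

Lemma lll_all (R : realType) (V : finType) (q : nat) (P : {set V} -> {set 'I_q})
  (E : {set {set V}}) (x : R) : (0 < q)%N -> 0 <= x <= 1 ->
  (forall f, f \in E -> (0 < #|f|)%N /\
     q%:R <= x * (1 - x) ^+ (#|Gam E f|.-1) * q%:R ^+ #|f|) ->
  forall N, lll_hyp P E x N.
Proof.
move=> q0 hx hf; have /andP[x0 x1] := hx.
elim=> [|N IH] G GE hG f fE; first by [].
case fG : (f \in G).
  by rewrite good_bad0 // cards0 mulr_ge0 // ler0n.
set G2 := [set h in G | [disjoint h & f]].
set G1 := [set h in G | ~~ [disjoint h & f]].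
have eG : G2 :|: G1 = G.
  by apply/setP => h; rewrite !inE; case: (h \in G); case: [disjoint h & f].
have G2E : G2 \subset E.
  by apply: fintype.subset_trans GE; apply/fintype.subsetP => h; rewrite inE => /andP[].
have G1E : G1 \subset E.
  by apply: fintype.subset_trans GE; apply/fintype.subsetP => h; rewrite inE => /andP[].
have hN : (#|G2 :|: G1| <= N)%N by rewrite eG.
have ch := chain hx IH (erefl _) G1E G2E hN; rewrite eG in ch.
have [f0 hfq] := hf f fE.
have hd : forall h, h \in G2 -> [disjoint h & f] by move=> h; rewrite inE => /andP[].
have bc := bad_card P f0 (good_invar (P:=P) hd).
have ab : (#|proper_cols G P :&: Bad P f| <= #|proper_cols G2 P :&: Bad P f|)%N.
  apply: subset_leq_card; apply: finset.setSI; apply: good_sub.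
  by apply/fintype.subsetP => h; rewrite inE => /andP[].
have m1 : (#|G1| <= #|Gam E f|.-1)%N.
  have : (#|G1| < #|Gam E f|)%N.
    apply: proper_card; apply/properP; split.
      apply/fintype.subsetP => h; rewrite !inE => /andP[hG' ->]; rewrite andbT.
      exact: (fintype.subsetP GE).
    exists f; last by rewrite inE fG.
    rewrite inE fE /=; case/card_gt0P: f0 => u uf.
    by apply/negP => /pred0P/(_ u) /=; rewrite uf.
  by move=> h; rewrite -ltnS (ltn_predK h).
have x1' : 0 <= 1 - x by rewrite subr_ge0.
have x1'' : 1 - x <= 1 by rewrite lerBlDr lerDl.
have zy : (1 - x) ^+ #|Gam E f|.-1 <= (1 - x) ^+ #|G1| by apply: ler_wiXn2l.
set a := #|proper_cols G P :&: Bad P f| in ab *.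
set b := #|proper_cols G2 P :&: Bad P f| in ab bc.
set g2 := #|proper_cols G2 P| in bc ch.
set g := #|proper_cols G P| in ch *.
set Q := (q%:R : R) ^+ #|f| in hfq.
have Q0 : 0 < Q by rewrite exprn_gt0 // ltr0n.
have g20 : 0 <= (g2%:R : R) by apply: ler0n.
rewrite -(ler_pM2r Q0).
have ba : (a%:R : R) * Q <= b%:R * Q by rewrite ler_pM2r // ler_nat.
apply: le_trans ba _.
have bq : (b%:R : R) * Q <= q%:R * g2%:R by rewrite /Q -natrX -!natrM ler_nat.
apply: le_trans bq _.
apply: le_trans (ler_wpM2r g20 hfq) _.
have zg : (1 - x) ^+ #|Gam E f|.-1 * g2%:R <= g%:R.
  by apply: le_trans ch; apply: ler_wpM2r.
have xQ : 0 <= x * Q by rewrite mulr_ge0 // ltW.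
move: zg xQ; set z := (1 - x) ^+ #|Gam E f|.-1 => zg xQ.
rewrite -(mulrA x z) (mulrC z Q) !mulrA -(mulrA (x * Q)) [x * g%:R * Q]mulrAC.
exact: ler_wpM2l.
Qed.

Lemma core (R : realType) (V : finType) (q : nat) (P : {set V} -> {set 'I_q})
  (E : {set {set V}}) (x : R) (S : {set V}) (c : 'I_q) :
  0 <= x <= 1 -> (forall N, lll_hyp P E x N) ->
  (#|proper_cols E P :&: Mset S c|%:R * q%:R ^+ #|S|) * (1 - x) ^+ #|Gam E S|
    <= #|proper_cols E P|%:R.
Proof.
move=> hx hyp; have /andP[x0 x1] := hx.
set E2 := [set h in E | [disjoint h & S]].
have eE : E2 :|: Gam E S = E.
  by apply/setP => h; rewrite !inE; case: (h \in E); case: [disjoint h & S].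
have E2E : E2 \subset E by apply/fintype.subsetP => h; rewrite inE => /andP[].
have GE : Gam E S \subset E by apply/fintype.subsetP => h; rewrite inE => /andP[].
have hN : (#|E2 :|: Gam E S| <= #|E|)%N by rewrite eE.
have ch := chain hx (hyp #|E|) (erefl _) GE E2E hN; rewrite eE in ch.
have hd : forall h, h \in E2 -> [disjoint h & S] by move=> h; rewrite inE => /andP[].
have ic := indep_card c (erefl _) (good_invar (P:=P) hd).
have mono : (#|proper_cols E P :&: Mset S c| <= #|proper_cols E2 P :&: Mset S c|)%N.
  by apply: subset_leq_card; apply: finset.setSI; apply: good_sub.
have x1' : 0 <= 1 - x by rewrite subr_ge0.
apply: le_trans ch; rewrite mulrC; apply: ler_wpM2l; first exact: exprn_ge0.
apply: (@le_trans _ _ (#|proper_cols E2 P :&: Mset S c|%:R * q%:R ^+ #|S|)).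
  by apply: ler_wpM2r; [exact: exprn_ge0 | rewrite ler_nat].
by rewrite -natrX -natrM ler_nat.
Qed.

Lemma gam_card (V : finType) (E : {set {set V}}) (S : {set V}) :
  (#|Gam E S| <= #|S| * maxdeg E)%N.
Proof.
have sub : Gam E S \subset \bigcup_(u in S) [set e in E | u \in e].
  apply/fintype.subsetP => h; rewrite inE => /andP[hE /pred0Pn [u /andP[uh uS]]].
  by apply/bigcupP; exists u => //; rewrite inE hE.
apply: leq_trans (subset_leq_card sub) _.
apply: leq_trans (unstable.card_big_setU _ _ _) _.
apply: leq_trans (_ : (\sum_(u in S) maxdeg E <= _)%N).
  by apply: leq_sum => u _; apply: leq_bigmax.
by rewrite sum_nat_const.
Qed.

Lemma bern (R : realType) (x : R) (m : nat) : 0 <= x <= 1 ->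
  1 - m%:R * x <= (1 - x) ^+ m.
Proof.
move=> /andP[x0 x1]; elim: m => [|m IH]; first by rewrite mul0r subr0 expr0.
have x1' : 0 <= 1 - x by rewrite subr_ge0.
rewrite exprS; apply: le_trans (ler_wpM2l x1' IH).
have h : 0 <= m%:R * x * x by rewrite !mulr_ge0 // ler0n.
rewrite -natr1; lra.
Qed.

Lemma expbound (R : realType) (n : R) (m : nat) : 2 <= n -> m%:R <= n - 1 ->
  expR (-1) <= (1 - n^-1) ^+ m.
Proof.
move=> n2 hm.
have n1 : 0 < n - 1 by lra.
set y := (n - 1)^-1.
have y0 : 0 < y by rewrite invr_gt0.
have e1 : 1 - n^-1 = (1 + y)^-1.
  have n1' : 0 < n - 1 + 1 by lra.
  by rewrite /y; field; rewrite (gt_eqF n1) (gt_eqF n1').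
rewrite e1 exprVn expRN; rewrite lef_pV2 ?posrE ?expR_gt0 ?exprn_gt0 //; last lra.
apply: le_trans (_ : expR y ^+ m <= _).
  by apply: lerXn2r; rewrite ?nnegrE ?expR_ge0 //; [lra | apply: expR_ge1Dx].
rewrite -expRM_natl ler_expR.
rewrite /y ler_pdivrMr //; lra.
Qed.

Lemma num1 (R : realType) (T N Qs z e tD x : R) : 0 <= T -> 0 < e ->
  e * tD <= Qs -> e^-1 <= z -> x * tD = 1 -> 0 <= x -> T * Qs * z <= N -> T <= x * N.
Proof.
move=> T0 e0 hQ hz hx x0 h.
have tD0 : 0 <= tD.
  rewrite leNgt; apply/negP => tn.
  have : x * tD <= 0 by rewrite mulr_ge0_le0 // ltW.
  by rewrite hx; lra.
have h1 : T * tD <= T * Qs * z.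
  have -> : T * tD = T * (e * tD) * e^-1.
    by field; rewrite gt_eqF.
  apply: ler_pM => //.
  - by rewrite mulr_ge0 // mulr_ge0 // ltW.
  - by rewrite invr_ge0 ltW.
  - by apply: ler_wpM2l.
have -> : T = x * (T * tD) by rewrite mulrCA hx mulr1.
by apply: ler_wpM2l => //; apply: le_trans h.
Qed.

Lemma num2 (R : realType) (q e tD x z Qf : R) : 0 <= q -> 0 < e -> 0 <= x ->
  x * tD = 1 -> e^-1 <= z -> q * (e * tD) <= Qf -> q <= x * z * Qf.
Proof.
move=> q0 e0 x0 hx hz hQ.
have tD0 : 0 <= tD.
  rewrite leNgt; apply/negP => tn.
  have : x * tD <= 0 by rewrite mulr_ge0_le0 // ltW.
  by rewrite hx; lra.
have -> : q = x * e^-1 * (q * (e * tD)).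
  have -> : x * e^-1 * (q * (e * tD)) = (x * tD) * q * (e^-1 * e) by ring.
  by rewrite hx mulVf ?mulr1 ?mul1r // gt_eqF.
apply: ler_pM => //.
- by rewrite mulr_ge0 // invr_ge0 ltW.
- by rewrite !mulr_ge0 // ltW.
- by apply: ler_wpM2l.
Qed.

Lemma up_final (R : realType) (Nc q N u : R) : 0 <= Nc -> 0 < q -> 0 < N -> 0 < u ->
  u <= 2^-1 -> Nc * q * (1 - u) <= N -> Nc / N <= q^-1 * (1 + 4 * u).
Proof.
move=> Nc0 q0 N0 u0 u2 key.
set A := Nc * q in key.
have A0 : 0 <= A by rewrite mulr_ge0 // ltW.
have h1 : 0 <= A * u * (3 - 4 * u) by rewrite !mulr_ge0 // ?ltW //; lra.
have h2 : A * (1 - u) * (1 + 4 * u) <= N * (1 + 4 * u).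
  by apply: ler_wpM2r => //; lra.
have h3 : A <= (1 + 4 * u) * N by rewrite mulrC; lra.
rewrite ler_pdivrMr //.
have qne : q != 0 by rewrite gt_eqF.
rewrite -[Nc](mulfK qne) -/A.
have -> : q^-1 * (1 + 4 * u) * N = ((1 + 4 * u) * N) * q^-1 by ring.
by apply: ler_wpM2r => //; rewrite invr_ge0 ltW.
Qed.

Lemma low_final (R : realType) (Nc q N u G Bd : R) : 0 < q -> 0 < N ->
  N = G + Bd -> G <= q * Nc -> Bd <= u * N -> q^-1 * (1 - u) <= Nc / N.
Proof.
move=> q0 N0 eN hG hB.
rewrite ler_pdivlMr //.
have qne : q != 0 by rewrite gt_eqF.
have h : (1 - u) * N <= q * Nc by lra.
have -> : q^-1 * (1 - u) * N = q^-1 * ((1 - u) * N) by ring.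
have -> : Nc = q^-1 * (q * Nc) by rewrite mulKf.
by apply: ler_wpM2l => //; rewrite invr_ge0 ltW.
Qed.

Unset Implicit Arguments. Set Strict Implicit.

Theorem lemma2p5 (R : realType) (V : finType) (q : nat)
    (E : {set {set V}}) (P : {set V} -> {set 'I_q})
    (k' k : nat) (t : R) :
  (2 <= k')%N -> (k' <= k)%N ->
  (forall e, e \in E -> (k' <= #|e| <= k)%N) ->
  k%:R <= t ->
  powR (expR 1 * t * (maxdeg E)%:R) (1 / (k'.-1)%:R) <= q%:R ->
  forall (v : V) (c : 'I_q),
    q%:R^-1 * (1 - t^-1) <= prob_colour R E P v c /\
    prob_colour R E P v c <= q%:R^-1 * (1 + 4 / t).
Proof.
move=> hk' hkk hE hkt hpow v c.
have q0 : (0 < q)%N by case: c => i hi; apply: leq_ltn_trans hi.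
have qR0 : 0 < (q%:R : R) by rewrite ltr0n.
have q1 : 1 <= (q%:R : R) by rewrite ler1n.
set D := maxdeg E in hpow *.
have t2 : 2 <= t.
  apply: le_trans hkt; rewrite ler_nat; lia.
have t0 : 0 < t by lra.
set x : R := (t * D%:R)^-1.
have Dpos : forall e, e \in E -> (0 < D)%N.
  move=> e eE; have /andP[h1 _] := hE e eE.
  have : (0 < #|e|)%N by lia.
  case/card_gt0P => u ue.
  apply: leq_trans (leq_bigmax u); rewrite /hdeg; apply/card_gt0P; exists e.
  by rewrite inE eE ue.
have xD : D%:R * x <= t^-1.
  case: (posnP D) => [D0|Dp].
    by rewrite D0 mul0r invr_ge0 ltW.
  by rewrite /x invfM mulrCA mulfV ?mulr1 // pnatr_eq0 -lt0n.
have hx2 : 0 <= x <= 2^-1.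
  case: (posnP D) => [D0|Dp].
    by rewrite /x D0 mulr0 invr0 lexx /= invr_ge0 ler0n.
  have D1 : 1 <= (D%:R : R) by rewrite ler1n.
  have tD : 2 <= t * D%:R by nra.
  rewrite /x invr_ge0 (ltW (lt_le_trans _ tD)) //=.
  by rewrite lef_pV2 ?posrE; lra.
have hx : 0 <= x <= 1 by move: hx2 => /andP[a b]; apply/andP; split; lra.
have x1 : 0 < 1 - x by case/andP: hx2 => _ h; lra.
have KQ : expR 1 * t * D%:R <= q%:R ^+ k'.-1.
  have a0 : 0 <= expR 1 * t * D%:R.
    by apply: mulr_ge0; [apply: mulr_ge0; [exact: expR_ge0 | exact: ltW] | exact: ler0n].
  have : powR (expR 1 * t * D%:R) (1 / (k'.-1)%:R) ^+ k'.-1 <= q%:R ^+ k'.-1.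
    by apply: lerXn2r; rewrite ?nnegrE ?powR_ge0 ?ler0n.
  rewrite -powR_mulrn ?powR_ge0 // -powRrM div1r mulVf ?powRr1 //.
  by rewrite pnatr_eq0 -lt0n; move: hk'; case: (k') => [|[|n]].
have tD2 : forall e, e \in E -> 2 <= t * D%:R.
  move=> e eE; have D1 : 1 <= (D%:R : R) by rewrite ler1n; exact: Dpos e eE.
  nra.
have xinv : forall e, e \in E -> x * (t * D%:R) = 1.
  move=> e eE; rewrite /x mulVf // gt_eqF //; apply: lt_le_trans (tD2 e eE); lra.
have e0 : 0 < expR 1 :> R by apply: expR_gt0.
have x0 : 0 <= x by case/andP: hx.
have natl1 : forall a b, (a <= b)%N -> (0 < b)%N -> (a.-1.+1 <= b)%N by case.
have hyp : forall N, lll_hyp P E x N.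
  apply: lll_all => // f fE.
  have /andP[kf fk] := hE f fE.
  split; first by apply: leq_trans kf; apply: leq_trans hk'.
  have Dp := Dpos f fE.
  have gm : ((#|Gam E f|).-1.+1 <= k * D)%N.
    apply: natl1; last by rewrite muln_gt0 Dp andbT; apply: leq_trans hkk; apply: leq_trans hk'.
    by apply: leq_trans (gam_card E f) _; rewrite leq_mul2r fk orbT.
  have hm : ((#|Gam E f|).-1)%:R <= t * D%:R - 1.
    have : ((#|Gam E f|).-1.+1)%:R <= (k * D)%:R :> R by rewrite ler_nat.
    rewrite -natr1 natrM => h.
    have : k%:R * D%:R <= t * D%:R by apply: ler_wpM2r => //; apply: ler0n.
    lra.
  have z := expbound (tD2 f fE) hm.
  apply: (@num2 R q%:R (expR 1) (t * D%:R)) => //.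
  - exact: xinv fE.
  - by rewrite -expRN.
  have f1 : #|f| = (#|f|.-1).+1 by rewrite prednK //; apply: leq_trans kf; apply: leq_trans hk'.
  rewrite f1 exprS; apply: ler_wpM2l; first exact: ler0n.
  rewrite mulrA; apply: le_trans KQ _; apply: ler_weXn2l => //.
  by rewrite -!subn1 leq_sub2r.
set N := #|proper_cols E P|.
have N0 : (0 < N)%N.
  have hN : (#|finset.set0 :|: E| <= #|E|)%N by rewrite finset.set0U.
  have ch := chain hx (hyp #|E|) (erefl _) (fintype.subxx E) (finset.sub0set E) hN.
  rewrite finset.set0U in ch.
  have g0 : proper_cols finset.set0 P = [set: {ffun V -> 'I_q}].
    by apply/setP => s; rewrite !inE; apply/forallP => e; rewrite finset.in_set0.
  rewrite g0 cardsT card_ffun card_ord in ch.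
  have p0 : 0 < (1 - x) ^+ #|E| * (q ^ #|V|)%:R :> R.
    by rewrite mulr_gt0 // ?ltr0n ?expn_gt0 ?q0 //; apply: exprn_gt0.
  by rewrite -(ltr0n R); apply: lt_le_trans ch.
have NR : 0 < (N%:R : R) by rewrite ltr0n.
have qne : (q%:R : R) != 0 by rewrite gt_eqF.
have u0 : 0 < t^-1 by rewrite invr_gt0.
have u2 : t^-1 <= 2^-1 by rewrite lef_pV2 ?posrE //; lra.
have eNc : [set s in proper_cols E P | s v == c] = proper_cols E P :&: Mset [set v] c.
  apply/setP => s; rewrite !inE; congr (_ && _).
  apply/idP/idP => [/eqP h|/forallP h].
    by apply/forallP => u; apply/implyP; rewrite finset.in_set1 => /eqP ->; rewrite h.
  by have := h v; rewrite finset.in_set1 eqxx.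
rewrite /prob_colour eNc -/N.
set Nc := #|proper_cols E P :&: Mset [set v] c|.
split.
  set B := [set s : {ffun V -> 'I_q} |
    [forall e in E, (v \in e) ==> ~~ [forall u in e :\ v, s u == c]]].
  have cid := cardsID B (proper_cols E P).
  have good : (#|proper_cols E P :&: B| <= q * Nc)%N.
    pose f := fun s : {ffun V -> 'I_q} => (s v, upd s v c).
    have inj : injective f.
      move=> s s' [e1 e2]; apply/ffunP => y.
      have := congr1 (fun g : {ffun V -> 'I_q} => g y) e2; rewrite /upd !ffunE.
      by case: eqP => [->|].
    rewrite -(card_imset _ inj) -[X in (X * _)%N]card_ord -cardsT -cardsX.
    apply: subset_leq_card; apply/fintype.subsetP => p /imsetP [s].
    rewrite !inE => /andP[sP sB] ->.
    rewrite /= /f /=; apply/andP; split; last first.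
      apply/forallP => u; apply/implyP; rewrite finset.in_set1 => /eqP ->.
      by rewrite /upd ffunE eqxx.
    rewrite /proper_col /upd; apply/forallP => e; apply/implyP => eE.
    move: sP; rewrite /proper_col => /forallP/(_ e); rewrite eE /= => sPe.
    case ve : (v \in e).
      move/forallP: sB => /(_ e); rewrite eE ve /= => /forallPn [u].
      rewrite negb_imply => /andP[ue scu].
      move: ue; rewrite in_setD1 => /andP[uv ue].
      have sub2 : [set c; s u] \subset
          [set [ffun x => if x == v then c else s x] y | y in e] :|: P e.
        apply/fintype.subsetP => w; rewrite !inE => /orP[/eqP->|/eqP->]; apply/orP; left.
          by apply/imsetP; exists v => //; rewrite ffunE eqxx.
        by apply/imsetP; exists u => //; rewrite ffunE (negbTE uv).
      apply: leq_trans (subset_leq_card sub2); rewrite cards2.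
      by rewrite eq_sym scu.
    have -> : [set [ffun x => if x == v then c else s x] y | y in e] = [set s y | y in e].
      apply: eq_in_imset => y ye; rewrite ffunE; case: eqP => // yv.
      by rewrite -yv ye in ve.
    exact: sPe.
  have bad : (#|proper_cols E P :\: B| <=
      \sum_(e in [set e in E | v \in e]) #|proper_cols E P :&: Mset (e :\ v) c|)%N.
    apply: leq_trans (unstable.card_big_setU _ _ _).
    apply: subset_leq_card; apply/fintype.subsetP => s; rewrite !inE => /andP[nB sP].
    move/forallPn: nB => [e]; rewrite !negb_imply => /and4P[eE ve H _].
    apply/finset.bigcupP; exists e; first by rewrite inE eE ve.
    by rewrite !inE sP H.
  have term : forall e, e \in E -> v \in e ->
      #|proper_cols E P :&: Mset (e :\ v) c|%:R <= x * N%:R.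
    move=> e eE ve.
    have /andP[ke ek] := hE e eE.
    have Dp := Dpos e eE.
    have ep : (0 < #|e|)%N by apply: leq_trans ke; apply: leq_trans hk'.
    have se : #|e :\ v| = #|e|.-1 by rewrite (cardsD1 v e) ve.
    have co := core (e :\ v) c hx hyp.
    have gm : (#|Gam E (e :\ v)|.+1 <= k * D)%N.
      apply: leq_trans (_ : (#|e :\ v| * D).+1 <= _)%N; first by rewrite ltnS gam_card.
      apply: leq_trans (_ : (#|e :\ v| * D + D <= _)%N); first by rewrite -addn1 leq_add2l.
      by rewrite addnC -mulSn se (prednK ep) leq_mul2r ek orbT.
    have hm : (#|Gam E (e :\ v)|)%:R <= t * D%:R - 1.
      have : (#|Gam E (e :\ v)|.+1)%:R <= (k * D)%:R :> R by rewrite ler_nat.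
      rewrite -natr1 natrM => h.
      have : k%:R * D%:R <= t * D%:R by apply: ler_wpM2r => //; apply: ler0n.
      move: h; clear; move=> h1 h2; lra.
    have z := expbound (tD2 e eE) hm.
    apply: (@num1 R _ _ (q%:R ^+ #|e :\ v|) _ (expR 1) (t * D%:R)) co => //.
    - rewrite mulrA; apply: le_trans KQ _; apply: ler_weXn2l => //.
      by rewrite se -!subn1 leq_sub2r.
    - by rewrite -expRN.
    - exact: xinv eE.
  apply: (@low_final R Nc%:R q%:R N%:R t^-1 (#|proper_cols E P :&: B|%:R)
    (#|proper_cols E P :\: B|%:R)) => //.
  - by rewrite -natrD cid.
  - by rewrite -natrM ler_nat.
  apply: le_trans (_ : (\sum_(e in [set e in E | v \in e])
      #|proper_cols E P :&: Mset (e :\ v) c|)%:R <= _).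
    by rewrite ler_nat.
  rewrite natr_sum.
  apply: le_trans (_ : \sum_(e in [set e in E | v \in e]) x * N%:R <= _).
    by apply: ler_sum => e; rewrite inE => /andP[eE ve]; exact: term.
  rewrite sumr_const -(mulr_natl (x * N%:R)) mulrA; apply: ler_wpM2r; first exact: ler0n.
  apply: le_trans xD; apply: ler_wpM2r => //; rewrite ler_nat.
  exact: (leq_bigmax (F := hdeg E) v).
have co := core [set v] c hx hyp.
rewrite cards1 expr1 -/N -/Nc in co.
have gv : (#|Gam E [set v]| <= D)%N by have := gam_card E [set v]; rewrite cards1 mul1n.
have b := bern (#|Gam E [set v]|) hx.
have mx : (#|Gam E [set v]|)%:R * x <= t^-1.
  by apply: le_trans xD; apply: ler_wpM2r => //; rewrite ler_nat.
apply: up_final => //.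
apply: le_trans co; apply: ler_wpM2l; first by rewrite mulr_ge0 // ler0n.
by apply: le_trans b; rewrite lerD2l lerN2.
Qed.
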